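(* Let $G$ be a simple graph having two edges with no common end. Then $(\lambda-1)^2$ divides $P(\mathcal{H}_{\bullet G},\lambda)$.
   Context: A hypergraph $\mathcal{H}=(\mathcal{V},\mathcal{E})$ consists of a finite vertex set $\mathcal{V}$ and a set $\mathcal{E}$ of subsets of $\mathcal{V}$, each of size at least $1$, called edges. For a positive integer $\lambda$, a weak proper $\lambda$-colouring of $\mathcal{H}$ is a map $\phi:\mathcal{V}\to\{1,\dots,\lambda\}$ such that $|\{\phi(v):v\in e\}|>1$ for every $e\in\mathcal{E}$. $P(\mathcal{H},\lambda)$ denotes the number of weak proper $\lambda$-colourings; it is a polynomial in $\lambda$. For a simple graph $G=(V,E)$, $\mathcal{H}_{\bullet G}$ is the hypergraph with vertex set $V\cup\{w\}$, $w\notin V$ a new vertex, and edge set $\{\{u,v,w\}:uv\in E\}$. *)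

(* Defs.v *)
From HB Require Import structures.
From mathcomp Require Import all_boot all_order all_algebra.
Set Implicit Arguments. Unset Strict Implicit. Unset Printing Implicit Defensive.
Import GRing.Theory Num.Theory.

Definition hyp_edges_ok (T : finType) (E : {set {set T}}) : bool :=
  [forall e in E, e != set0].

Definition weak_proper (T : finType) (E : {set {set T}}) (lam : nat)
  (phi : {ffun T -> 'I_lam}) : bool :=
  [forall e in E, 1 < #|[set phi v | v in e]|].

Definition num_weak_colourings (T : finType) (E : {set {set T}}) (lam : nat) : nat :=
  #|[set phi : {ffun T -> 'I_lam} | @weak_proper T E lam phi]|.

(* p is the chromatic polynomial P(H, .) : it agrees with the counting function
   at every positive integer (this determines p uniquely). *)
Definition is_chrom_poly (T : finType) (E : {set {set T}}) (p : {poly rat}) : Prop :=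
  forall lam : nat, (0 < lam)%N -> (p.[lam%:R] = (num_weak_colourings E lam)%:R)%R.

Definition simple_graph (V : finType) (adj : rel V) : Prop :=
  symmetric adj /\ irreflexive adj.

(* The hypergraph H_{.G}: vertex set option V (None is the new vertex w),
   edges {u, v, w} for each edge uv of G. *)
Definition bullet_edges (V : finType) (adj : rel V) : {set {set option V}} :=
  [set [set Some x.1; Some x.2; None] | x in [set x : V * V | adj x.1 x.2]].

(* Main.v *)
Require Import Defs.
From HB Require Import structures.
From mathcomp Require Import all_boot all_order all_algebra.
Import GRing.Theory Num.Theory.
Set Implicit Arguments. Unset Strict Implicit.

Definition indep (V : finType) (adj : rel V) (S : {set V}) : bool :=
  [forall x : V * V, adj x.1 x.2 ==> ~~ ((x.1 \in S) && (x.2 \in S))].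

Lemma card3 (T : finType) (a b c : T) :
  (1 < #|[set a; b; c]|) = ~~ ((a == c) && (b == c)).
Proof.
case: (eqVneq a c) => [->|ac]; case: (eqVneq b c) => [->|bc].
- by rewrite !setUid cards1 ?eqxx.
- rewrite ?andbF ?andFb; apply/card_gt1P; exists b, c; by split; rewrite ?inE ?eqxx ?orbT.
- rewrite ?andbF ?andFb; apply/card_gt1P; exists a, c; by split; rewrite ?inE ?eqxx ?orbT.
- rewrite ?andbF ?andFb; apply/card_gt1P; exists a, c; by split; rewrite ?inE ?eqxx ?orbT.
Qed.

Lemma wp_iff (V : finType) (adj : rel V) lam (phi : {ffun option V -> 'I_lam}) :
  weak_proper (bullet_edges adj) phi = indep adj [set v | phi (Some v) == phi None].
Proof.
apply/idP/idP.
- move/forallP => H; apply/forallP => x; apply/implyP => axy.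
  have := H [set Some x.1; Some x.2; None].
  have -> : [set Some x.1; Some x.2; None] \in bullet_edges adj.
    by apply/imsetP; exists x; rewrite ?inE.
  by rewrite /= !imsetU !imset_set1 card3 !inE.
- rewrite /indep; move/forallP => H; apply/forallP => e; apply/implyP => /imsetP [x].
  rewrite inE => axy ->.
  rewrite !imsetU !imset_set1 card3.
  by have := H x; rewrite axy /= !inE.
Qed.

Lemma count_eq (V : finType) (adj : rel V) lam :
  num_weak_colourings (bullet_edges adj) lam =
  (lam * \sum_(S : {set V} | indep adj S) (lam.-1) ^ (#|V| - #|S|))%N.
Proof.
rewrite /num_weak_colourings -sum1_card.
pose p (phi : {ffun option V -> 'I_lam}) :=
  (phi None, [set v | phi (Some v) == phi None]).
rewrite (partition_big p (fun j => indep adj j.2)); last first.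
  by move=> phi; rewrite inE wp_iff.
pose G (c : 'I_lam) (S : {set V}) (x : option V) : pred 'I_lam :=
  if x is Some v then (if v \in S then pred1 c else predC1 c) else pred1 c.
transitivity (\sum_(j | indep adj j.2) #|(family (G j.1 j.2) : simpl_pred {ffun option V -> 'I_lam})|).
  apply: eq_bigr => [[c S]] /= HS.
  rewrite -sum1_card; apply: eq_bigl => phi.
  apply/idP/idP.
  - rewrite inE => /andP [_ /eqP [Hc HS']].
    apply/familyP => [[v|]] /=; last by rewrite inE Hc.
    rewrite -HS' inE -Hc; case: eqP => [->|/eqP]; by rewrite inE.
  - move/familyP => H.
    have Hc : phi None = c by have := H None; rewrite /= inE => /eqP.
    have HS' : [set v | phi (Some v) == phi None] = S.
      apply/setP => v; rewrite inE Hc; have := H (Some v) => /=.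
      by case: (v \in S); rewrite inE // => /negbTE.
    by rewrite inE wp_iff HS' HS /p HS' Hc eqxx.
transitivity (\sum_(j : 'I_lam * {set V} | indep adj j.2) lam.-1 ^ (#|V| - #|j.2|)).
  apply: eq_bigr => [[c S]] /= _.
  rewrite card_family foldrE big_image /=.
  rewrite (eq_bigr (fun x => if x \in Some @: ~: S then lam.-1 else 1)%N); last first.
    move=> [v|] _ /=.
    - rewrite (mem_imset _ _ Some_inj) inE.
      case: (v \in S) => /=; first by rewrite card1.
      by rewrite cardC1 card_ord.
    - rewrite card1; case: imsetP => // [[x _ ]] //.
  rewrite -big_mkcond /= prod_nat_const card_imset; last exact: Some_inj.
  by rewrite -(cardsC S) addKn.
transitivity (\sum_(i : 'I_lam) \sum_(S : {set V} | indep adj S) lam.-1 ^ (#|V| - #|S|))%N.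
  by rewrite pair_big_dep.
by rewrite sum_nat_const card_ord.
Qed.

Lemma indep_big (V : finType) (adj : rel V) (a b c d : V) (S : {set V}) :
  adj a b -> adj c d -> [&& a != c, a != d, b != c & b != d] ->
  indep adj S -> (2 <= #|V| - #|S|)%N.
Proof.
move=> ab cd /and4P [ac ad bc bd] /forallP H.
rewrite -(cardsC S) addKn.
have H1 := H (a, b); have H2 := H (c, d).
rewrite /= ab in H1; rewrite /= cd in H2.
have [x [xab xS]] : exists x, (x == a) || (x == b) /\ x \in ~: S.
  case: (boolP (a \in S)) => aS.
  - exists b; rewrite eqxx orbT inE; split => //; by move: H1; rewrite aS.
  - by exists a; rewrite eqxx inE.
have [y [ycd yS]] : exists y, (y == c) || (y == d) /\ y \in ~: S.
  case: (boolP (c \in S)) => cS.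
  - exists d; rewrite eqxx orbT inE; split => //; by move: H2; rewrite cS.
  - by exists c; rewrite eqxx inE.
apply/card_gt1P; exists x, y; split => //.
by case/orP: xab => /eqP ->; case/orP: ycd => /eqP ->.
Qed.

Theorem mainTheorem18 (V : finType) (adj : rel V) :
  simple_graph adj ->
  (exists a b c d : V,
      [/\ adj a b, adj c d & [&& a != c, a != d, b != c & b != d]]) ->
  exists p : {poly rat},
    is_chrom_poly (bullet_edges adj) p /\
    ((('X - 1) ^+ 2 : {poly rat}) %| p)%R.
Proof.
move=> _ [a [b [c [d [ab cd dis]]]]].
exists ('X * \sum_(S : {set V} | indep adj S) ('X - 1) ^+ (#|V| - #|S|))%R.
split.
- move=> lam lam0; rewrite count_eq natrM natr_sum hornerM hornerX horner_sum.
  congr (_ * _)%R; apply: eq_bigr => S _.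
  by rewrite horner_exp hornerD hornerN hornerX hornerC natrX -subn1 natrB.
- apply: dvdp_mull; apply: (big_ind (fun q => ((('X - 1) ^+ 2 : {poly rat}) %| q)%R)) => [|x y|S HS]; [exact: dvdp0 | exact: dvdp_add |].
  exact: dvdp_exp2l (indep_big ab cd dis HS).
Qed.
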